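(* Let $E,A,B\in\mathbb{C}^{n,n}$ pairwise commute, $\tau>0$, and assume the initial value problem for the DDAE $E\dot x(t)=Ax(t)+Bx(t-\tau)+f(t)$, $t\in[0,\infty)$, $x|_{[-\tau,0]}=\varphi$, is uniquely solvable (for consistent, sufficiently smooth initial functions). Let $U\in\mathbb{C}^{n,n}$ be nonsingular with $UEU^{-1}=\mathrm{diag}(J^E,N^E_2,N^E_3,N^E_4)$, $UAU^{-1}=\mathrm{diag}(A_1,J^A,N^A_3,N^A_4)$, $UBU^{-1}=\mathrm{diag}(B_1,B_2,J^B,N^B_4)$, where $J^E,J^A,J^B$ are nonsingular and $N^E_2,N^E_3,N^E_4,N^A_3,N^A_4,N^B_4$ are nilpotent. Then the fourth diagonal blocks $N^E_4,N^A_4,N^B_4$ are absent (have size zero); consequently, in the transformed system the equation $N^E_4\dot x_4(t)=N^A_4x_4(t)+N^B_4x_4(t-\tau)+f_4(t)$ does not appear.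
   Context: Solutions are piecewise differentiable: continuous $x$ with $Ex$ piecewise continuously differentiable satisfying the equation for all $t\in[0,\infty)\setminus\bigcup_{j\in\mathbb{N}_0}\{j\tau\}$ (assumed $C^\infty$ on $[0,\infty)$ in the solvability analysis). An initial function is consistent if the IVP has at least one solution. Such a $U$ exists for any pairwise commuting triple. *)

(* Defs.v *)
From HB Require Import structures.
From mathcomp Require Import all_boot all_order all_algebra.
From mathcomp Require Import all_classical all_reals all_analysis.
From mathcomp Require Import complex.

Set Implicit Arguments.
Unset Strict Implicit.
Unset Printing Implicit Defensive.

Import Order.TTheory GRing.Theory Num.Theory.
Import numFieldNormedType.Exports.
Local Open Scope ring_scope.
Local Open Scope classical_set_scope.

Section DDAE.
Variable R : realType.
Local Notation C := (complex R).

Definition reC (z : C) : R := complex.Re z.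
Definition imC (z : C) : R := complex.Im z.

Definition smooth (g : R -> R) : Prop :=
  forall (k : nat) (t : R), derivable (derive1n k g) t 1.

(* g is C^infty on D: restriction to D of a C^infty function on R
   (for intervals this is equivalent to one-sided smoothness by Seeley's
   extension theorem) *)
Definition smooth_on (D : set R) (g : R -> R) : Prop :=
  exists G : R -> R, smooth G /\ forall t, D t -> G t = g t.

Variable n : nat.

Definition cvec_smooth_on (D : set R) (y : R -> 'cV[C]_n) : Prop :=
  forall i : 'I_n, smooth_on D (fun t => reC (y t i ord0)) /\
                   smooth_on D (fun t => imC (y t i ord0)).

Definition cvec_cont_on (D : set R) (y : R -> 'cV[C]_n) : Prop :=
  forall i : 'I_n, {within D, continuous (fun t => reC (y t i ord0))} /\
                   {within D, continuous (fun t => imC (y t i ord0))}.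

Definition cvec_deriv (y : R -> 'cV[C]_n) (t : R) (d : 'cV[C]_n) : Prop :=
  forall i : 'I_n, is_derive t 1 (fun s => reC (y s i ord0)) (reC (d i ord0)) /\
                   is_derive t 1 (fun s => imC (y s i ord0)) (imC (d i ord0)).

Definition pw_C1_nonneg (y : R -> 'cV[C]_n) : Prop :=
  exists s : nat -> R,
    s 0%N = 0 /\ (forall k, s k < s k.+1) /\ (forall M : R, exists k, M < s k) /\
    forall k, exists dy : R -> 'cV[C]_n,
      (forall t, s k < t < s k.+1 -> cvec_deriv y t (dy t)) /\
      exists g : R -> 'cV[C]_n, cvec_cont_on `[s k, s k.+1] g /\
        (forall t, s k < t < s k.+1 -> g t = dy t).

Definition ddae_solution (E A B : 'M[C]_n) (tau : R)
    (f phi x : R -> 'cV[C]_n) : Prop :=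
  (forall t, - tau <= t <= 0 -> x t = phi t) /\
  cvec_cont_on [set t | - tau <= t] x /\
  pw_C1_nonneg (fun t => E *m x t) /\
  (forall t, 0 <= t -> (forall j : nat, t != j%:R * tau) ->
     cvec_deriv (fun s => E *m x s) t (A *m x t + B *m x (t - tau) + f t)).

Definition consistent (E A B : 'M[C]_n) (tau : R) (f phi : R -> 'cV[C]_n) :=
  exists x, ddae_solution E A B tau f phi x.

Definition uniquely_solvable (E A B : 'M[C]_n) (tau : R) : Prop :=
  forall f phi : R -> 'cV[C]_n,
    cvec_smooth_on [set t | 0 <= t] f ->
    cvec_smooth_on `[- tau, 0] phi ->
    consistent E A B tau f phi ->
    exists x, ddae_solution E A B tau f phi x /\
      forall y, ddae_solution E A B tau f phi y ->
        forall t, - tau <= t -> y t = x t.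

End DDAE.

Definition nilpotent_mx (F : pzRingType) (m : nat) (M : 'M[F]_m) : Prop :=
  exists k : nat, M ^+ k = 0.

Definition diag4 (F : pzRingType) (n1 n2 n3 n4 : nat)
  (M1 : 'M[F]_n1) (M2 : 'M[F]_n2) (M3 : 'M[F]_n3) (M4 : 'M[F]_n4)
  : 'M[F]_(n1 + n2 + n3 + n4) :=
  block_mx (block_mx (block_mx M1 0 0 M2) 0 0 M3) 0 0 M4.

(* Main.v *)
Require Import Defs.
From HB Require Import structures.
From mathcomp Require Import all_boot all_order all_algebra.
From mathcomp Require Import all_classical all_reals all_analysis.
From mathcomp Require Import complex.

Import Order.TTheory GRing.Theory Num.Theory.
Import numFieldNormedType.Exports.
Local Open Scope ring_scope.

Lemma reC_rM (R : realType) (r : R) (z : complex R) : reC ((r%:C)%C * z) = r * reC z.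
Proof. by case: z => a b; rewrite /reC /=; rewrite mul0r subr0. Qed.
Lemma imC_rM (R : realType) (r : R) (z : complex R) : imC ((r%:C)%C * z) = r * imC z.
Proof. by case: z => a b; rewrite /imC /=; rewrite mul0r addr0. Qed.

Lemma smooth0 (R : realType) : smooth (fun _ : R => 0).
Proof.
move=> k t.
have -> : derive1n k (fun _ : R => (0:R)) = cst 0.
  elim: k => [|k IH]; first by rewrite derive1n0.
  by rewrite derive1nS IH; apply/funext => s; rewrite derive1_cst.
exact: derivable_cst.
Qed.

Lemma cvec_deriv0 (R : realType) n t : cvec_deriv (n:=n) (fun _ : R => 0) t 0.
Proof.
move=> i; rewrite /reC /imC mxE /=; split; exact: is_derive_cst.
Qed.

Lemma cvec_cont0 (R : realType) n D : cvec_cont_on (n:=n) D (fun _ : R => 0).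
Proof.
move=> i; rewrite /reC /imC mxE /=; split; apply: continuous_subspaceT; exact: cst_continuous.
Qed.

Lemma sol_kernel (R : realType) n (E A B : 'M[complex R]_n) (tau : R)
  (w : 'cV[complex R]_n) (g : R -> R) :
  E *m w = 0 -> A *m w = 0 -> B *m w = 0 -> continuous g ->
  (forall t, t <= 0 -> g t = 0) ->
  ddae_solution E A B tau (fun _ => 0) (fun _ => 0) (fun t => ((g t)%:C)%C *: w).
Proof.
move=> Ew Aw Bw gc g0.
have EX : (fun t => E *m (((g t)%:C)%C *: w)) = fun _ => 0.
  by apply/funext => t; rewrite -scalemxAr Ew scaler0.
split; [|split; [|split]].
- by move=> t /andP[_ t0]; rewrite g0 // scale0r.
- move=> i; split; apply: continuous_subspaceT => t.
  + rewrite (_ : (fun _ => _) = (fun t => g t * reC (w i ord0))); last first.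
      by apply/funext => s; rewrite mxE reC_rM.
    apply: (@continuousM _ _ g (cst _) t); [exact: gc | exact: cst_continuous].
  + rewrite (_ : (fun _ => _) = (fun t => g t * imC (w i ord0))); last first.
      by apply/funext => s; rewrite mxE imC_rM.
    apply: (@continuousM _ _ g (cst _) t); [exact: gc | exact: cst_continuous].
- rewrite EX; exists (fun k => k%:R); split; first by [].
  split; first by move=> k; rewrite ltr_nat.
  split; first by move=> M; exists (Num.truncn M).+1; exact: truncnS_gt.
  move=> k; exists (fun _ => 0); split; first by move=> t _; exact: cvec_deriv0.
  exists (fun _ => 0); split; first exact: cvec_cont0.
  by [].
- move=> t _ _; rewrite EX -!scalemxAr Aw Bw !scaler0 !addr0.
  exact: cvec_deriv0.
Qed.

Lemma nil_ker (F : fieldType) m (N : 'M[F]_m) (v : 'cV[F]_m) :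
  nilpotent_mx N -> v != 0 -> exists j, (N ^+ j *m v != 0) && (N *m (N ^+ j *m v) == 0).
Proof.
case=> k Nk; have : N ^+ k *m v = 0 by rewrite Nk mul0mx.
elim: k {Nk} => [|k IH].
  by rewrite expr0 mul1mx => ->; rewrite eqxx.
move=> Nk v0; have [Nk0|Nk0] := eqVneq (N ^+ k *m v) 0.
  exact: IH.
exists k; rewrite Nk0 /= mulmxA.
have -> : N *m N ^+ k = N ^+ k.+1 by rewrite exprS.
by rewrite Nk.
Qed.

Lemma comm_pow (F : fieldType) m (N M : 'M[F]_m) j :
  N *m M = M *m N -> N *m M ^+ j = M ^+ j *m N.
Proof.
move=> c; have c' : GRing.comm N M by exact: c.
exact: (commrX j c').
Qed.

Lemma common_ker (F : fieldType) m (N1 N2 N3 : 'M[F]_m) :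
  (0 < m)%N -> nilpotent_mx N1 -> nilpotent_mx N2 -> nilpotent_mx N3 ->
  N1 *m N2 = N2 *m N1 -> N1 *m N3 = N3 *m N1 -> N2 *m N3 = N3 *m N2 ->
  exists v : 'cV[F]_m, [/\ v != 0, N1 *m v = 0, N2 *m v = 0 & N3 *m v = 0].
Proof.
move=> hm n1 n2 n3 c12 c13 c23.
have v0 : delta_mx (Ordinal hm) (ord0 : 'I_1) != 0 :> 'cV[F]_m.
  apply/eqP => /matrixP /(_ (Ordinal hm) ord0); rewrite !mxE !eqxx /=.
  by apply/eqP; exact: oner_neq0.
have [j1 /andP[h1 /eqP k1]] := @nil_ker _ _ _ _ n1 v0.
set v1 := N1 ^+ j1 *m _ in h1 k1.
have [j2 /andP[h2 /eqP k2]] := @nil_ker _ _ _ _ n2 h1.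
set v2 := N2 ^+ j2 *m v1 in h2 k2.
have k21 : N1 *m v2 = 0 by rewrite /v2 mulmxA comm_pow // -mulmxA k1 mulmx0.
have [j3 /andP[h3 /eqP k3]] := @nil_ker _ _ _ _ n3 h2.
set v3 := N3 ^+ j3 *m v2 in h3 k3.
exists v3; split => //.
- by rewrite /v3 mulmxA comm_pow // -mulmxA k21 mulmx0.
- by rewrite /v3 mulmxA comm_pow // -mulmxA k2 mulmx0.
Qed.

Theorem corollary4 (R : realType) (n : nat) (E A B : 'M[complex R]_n) (tau : R) :
  E *m A = A *m E -> E *m B = B *m E -> A *m B = B *m A ->
  0 < tau ->
  uniquely_solvable E A B tau ->
  forall (n1 n2 n3 n4 : nat) (hn : (n1 + n2 + n3 + n4)%N = n) (U : 'M[complex R]_n)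
    (JE : 'M[complex R]_n1) (NE2 : 'M[complex R]_n2)
    (NE3 : 'M[complex R]_n3) (NE4 : 'M[complex R]_n4)
    (A1 : 'M[complex R]_n1) (JA : 'M[complex R]_n2)
    (NA3 : 'M[complex R]_n3) (NA4 : 'M[complex R]_n4)
    (B1 : 'M[complex R]_n1) (B2 : 'M[complex R]_n2)
    (JB : 'M[complex R]_n3) (NB4 : 'M[complex R]_n4),
  U \in unitmx ->
  U *m E *m invmx U = castmx (hn, hn) (diag4 JE NE2 NE3 NE4) ->
  U *m A *m invmx U = castmx (hn, hn) (diag4 A1 JA NA3 NA4) ->
  U *m B *m invmx U = castmx (hn, hn) (diag4 B1 B2 JB NB4) ->
  JE \in unitmx -> JA \in unitmx -> JB \in unitmx ->
  nilpotent_mx NE2 -> nilpotent_mx NE3 -> nilpotent_mx NE4 ->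
  nilpotent_mx NA3 -> nilpotent_mx NA4 -> nilpotent_mx NB4 ->
  n4 = 0%N.
Proof.
move=> cEA cEB cAB tau0 US n1 n2 n3 n4 hn U JE NE2 NE3 NE4 A1 JA NA3 NA4
  B1 B2 JB NB4 Uu hE hA hB _ _ _ _ _ nE4 _ nA4 nB4.
subst n.
idtac.
rewrite !castmx_id in hE hA hB.
have conj : forall X Y, (U *m X *m invmx U) *m (U *m Y *m invmx U) = U *m (X *m Y) *m invmx U.
  move=> X Y; rewrite !mulmxA -(mulmxA _ (invmx U) U) mulVmx // mulmx1.
  by rewrite -!mulmxA.
have blk : forall X Y X4 Y4 (Xo Yo : 'M[complex R]_(n1 + n2 + n3)),
  U *m X *m invmx U = block_mx Xo 0 0 X4 -> U *m Y *m invmx U = block_mx Yo 0 0 Y4 ->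
  X *m Y = Y *m X -> X4 *m Y4 = Y4 *m X4.
  move=> X Y X4 Y4 Xo Yo hX hY cXY.
  have := conj X Y; rewrite cXY -conj hX hY.
  move/(congr1 drsubmx); rewrite !mulmx_block !block_mxKdr !mul0mx !add0r.
  by move=> ->.
have c12 := blk _ _ _ _ _ _ hE hA cEA.
have c13 := blk _ _ _ _ _ _ hE hB cEB.
have c23 := blk _ _ _ _ _ _ hA hB cAB.
apply/eqP; rewrite -leqn0 leqNgt; apply/negP => hm.
have [v [v0 kE kA kB]] := @common_ker _ _ _ _ _ hm nE4 nA4 nB4 c12 c13 c23.
set c := col_mx (0 : 'cV[complex R]_(n1 + n2 + n3)) v.
set w := invmx U *m c.
have kerw : forall X X4 (Xo : 'M[complex R]_(n1 + n2 + n3)),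
  U *m X *m invmx U = block_mx Xo 0 0 X4 -> X4 *m v = 0 -> X *m w = 0.
  move=> X X4 Xo hX kX.
  have -> : X *m w = invmx U *m ((U *m X *m invmx U) *m c).
    by rewrite /w !mulmxA mulVmx // mul1mx.
  by rewrite hX mul_block_col !mulmx0 !mul0mx kX !addr0 col_mx0 mulmx0.
have Ew := kerw _ _ _ hE kE.
have Aw := kerw _ _ _ hA kA.
have Bw := kerw _ _ _ hB kB.
have w0 : w != 0.
  apply: contra v0 => /eqP w0.
  have : c = U *m w by rewrite /w mulmxA mulmxV // mul1mx.
  rewrite w0 mulmx0 -col_mx0 => /eq_col_mx [_ ->]; exact: eqxx.
have s1 := @sol_kernel R _ E A B tau w _ Ew Aw Bw (@cst_continuous R R 0) (fun (t:R) (_ : t <= 0) => erefl (0:R)).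
have gc : continuous (fun t : R => Num.max t 0).
  move=> t; apply: (@continuous_max _ _ id (cst 0) t); [exact: cvg_id | exact: cvg_cst].
have g0 : forall t : R, t <= 0 -> Num.max t 0 = 0.
  by move=> t t0; rewrite max_r.
have s2 := @sol_kernel R _ E A B tau w _ Ew Aw Bw gc g0.
have sm : forall D, cvec_smooth_on D (fun _ : R => (0 : 'cV[complex R]_(n1 + n2 + n3 + n4))).
  move=> D i; split; exists (fun _ => 0); (split; [exact: smooth0|]);
    by move=> t _; rewrite mxE.
have [x [_ Hu]] := US _ _ (sm _) (sm _) (ex_intro _ _ s1).
have t1 : - tau <= 1.
  by apply: (le_trans (y:=0)); [rewrite oppr_le0 ltW | exact: ler01].
have := Hu _ s1 1 t1; have := Hu _ s2 1 t1; rewrite /= max_l ?ler01 // => h2 h1.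
move: h2; rewrite -h1.
have e1 : ((1:R)%:C)%C = 1 by [].
have e0 : ((0:R)%:C)%C = 0 by [].
rewrite e1 e0 scale1r scale0r => /eqP; exact/negP.
Qed.
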